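(* Let $(Z,\delta)$ be a compact metric space and for $n\ge1$ let $X_n,Y_n$ be compact subsets of $Z$ with $X_n\cup Y_n\to Z_\infty$ in the $\delta$-Hausdorff metric. Assume that $X_n\cup Y_n$ (with the induced metric) is a geodesic space for every $n$. If $Z_\infty$ is 2-connected and $\mathrm{diam}(X_n\cap Y_n)\to0$, then $\min(\mathrm{diam}(X_n),\mathrm{diam}(Y_n))\to0$.
   Context: A compact metric space $(X,d)$ is geodesic if any two points $x,y$ are joined by an isometry $p:[0,d(x,y)]\to X$ with $p(0)=x$, $p(d(x,y))=y$. A metric space $X$ is 2-connected if $X\setminus\{x_0\}$ is connected for every $x_0\in X$. *)

(* Defs.v *)
From HB Require Import structures.
From mathcomp Require Import all_boot all_order all_algebra.
From mathcomp Require Import all_classical all_reals all_analysis.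
Set Implicit Arguments. Unset Strict Implicit. Unset Printing Implicit Defensive.
Import Order.TTheory GRing.Theory Num.Theory.
Local Open Scope classical_set_scope.
Local Open Scope ring_scope.

Section defs.
Context {R : realType} {Z : metricType R}.

Definition geodesic_set (S : set Z) : Prop :=
  forall x y, S x -> S y ->
    exists p : R -> Z,
      [/\ p 0 = x, p (mdist x y) = y,
          (forall t, 0 <= t <= mdist x y -> S (p t)) &
          (forall s t, 0 <= s <= mdist x y -> 0 <= t <= mdist x y ->
             mdist (p s) (p t) = `|s - t|)].

Definition two_connected (A : set Z) : Prop :=
  forall x0, A x0 -> connected (A `\ x0).

Definition hausdorff_dist (A B : set Z) : \bar R :=
  maxe (ereal_sup [set ereal_inf [set (mdist a b)%:E | b in B] | a in A])
       (ereal_sup [set ereal_inf [set (mdist a b)%:E | a in A] | b in B]).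

(* Diameter, with the convention diam set0 = 0. *)
Definition diam (A : set Z) : \bar R :=
  ereal_sup ([set (mdist p.1 p.2)%:E | p in A `*` A] `|` [set 0%E]).

End defs.

(* Main.v *)
Set Warnings "-all".
Require Import Defs.
From HB Require Import structures.
From mathcomp Require Import all_boot all_order all_algebra.
From mathcomp Require Import all_classical all_reals all_analysis.
Import Order.TTheory GRing.Theory Num.Theory.
Local Open Scope classical_set_scope.
Local Open Scope ring_scope.
From mathcomp Require Import lra.

Section S.
Context {R : realType} {Z : metricType R}.
Local Notation d := (@mdist R Z).

Lemma closed_mdist (A : set Z) z : closed A ->
  (forall e, 0 < e -> exists w, A w /\ d z w < e) -> A z.
Proof.
move=> cA H; apply: cA => B /nbhs_ballP [e /= e0 sB].
have [w [Aw dw]] := H e e0; exists w; split => //; apply: sB.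
by rewrite ballEmdist.
Qed.

Lemma crossing (X Y : set Z) x y : geodesic_set (X `|` Y) -> closed X -> closed Y ->
  X x -> Y y -> exists w, [/\ X w, Y w & d x w <= d x y].
Proof.
move=> G cX cY Xx Yy.
have [p [p0 pL pS pI]] := G x y (or_introl Xx) (or_intror Yy).
set L := d x y in p0 pL pS pI.
have L0 : 0 <= L by exact: mdist_ge0.
pose T := [set t | 0 <= t <= L /\ X (p t)].
have T0 : T 0 by split; [rewrite lexx L0 | rewrite p0].
have hT : has_sup T by split; [exists 0 | exists L => t [/andP[]]].
set s := sup T.
have s0 : 0 <= s by exact: sup_upper_bound.
have sL : s <= L by apply: ge_sup; [exists 0| move=> t [/andP[]]].
have sI : 0 <= s <= L by rewrite s0 sL.
have Xs : X (p s).
  apply: closed_mdist => // e e0.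
  have [t Tt hts] := sup_adherent e0 hT; case: (Tt) => /andP[t0 tL] Xt.
  exists (p t); split => //; rewrite pI //; last by rewrite t0.
  have h : t <= s := sup_upper_bound hT Tt.
  have hts2 : s - e < t := hts. rewrite ger0_norm ?subr_ge0 //; lra.
have Ys : Y (p s).
  have [sLe|sLt] := eqVneq s L; first by rewrite sLe pL.
  have {}sLt : s < L by rewrite lt_neqAle sLt.
  apply: closed_mdist => // e e0.
  pose t := Num.min (s + e / 2) L.
  have st : s < t by rewrite /t lt_min sLt andbT; lra.
  have tI : 0 <= t <= L by rewrite /t ge_min lexx orbT andbT; apply/ltW/(le_lt_trans s0 st).
  have nT : ~ T t.
    move=> Tt; have h : t <= s := sup_upper_bound hT Tt.
    by move: st; rewrite ltNge h.
  have : (X `|` Y) (p t) by exact: pS.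
  case=> [Xt|Yt]; first by exfalso; apply: nT.
  exists (p t); split => //; rewrite pI //.
  have : t <= s + e / 2 by rewrite /t ge_min lexx.
  rewrite ltr0_norm ?subr_lt0 //; lra.
exists (p s); split => //.
by rewrite -{1}p0 pI ?lexx ?L0 // sub0r normrN ger0_norm.
Qed.

Lemma ball_openM (x : Z) r : open (ball x r).
Proof.
rewrite openE => y; rewrite ballEmdist /= => h; apply/nbhs_ballP.
exists (r - d x y); first by rewrite /= subr_gt0.
move=> w; rewrite !ballEmdist /= => h2.
have := metric_triangle x y w; lra.
Qed.

Definition Rel (c z z' : Z) := 4 * d z z' < Num.min (d z c) (d z' c).

Inductive reach (c a : Z) (U : set Z) : Z -> Prop :=
| reach0 : reach c a U a
| reachS z z' : reach c a U z -> U z' -> Rel c z z' -> reach c a U z'.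

Arguments reachS {c a U z z'}.
Arguments reach0 {c a U}.

Lemma Rel_ball c w z : 0 < d w c -> 5 * d w z < d w c -> Rel c w z /\ Rel c z w.
Proof.
move=> h1 h2; have h3 := metric_triangle w z c.
have h4 := mdist_ge0 w z.
have h5 : 4 * d w z < Num.min (d w c) (d z c) by rewrite lt_min; apply/andP; split; lra.
split => //; rewrite /Rel metric_sym minC //.
Qed.

Lemma chain_all (U : set Z) c a : connected U -> U a ->
  (forall z, U z -> 0 < d z c) -> forall b, U b -> reach c a U b.
Proof.
move=> cU Ua Upos.
pose A := [set z | U z /\ reach c a U z].
pose Bl := fun z => ball z (d z c / 5).
have AU : A = U.
  apply: cU.
  - by exists a; split => //; constructor.
  - exists (\bigcup_(z in A) Bl z); first by apply: bigcup_open => z _; exact: ball_openM.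
    apply/seteqP; split.
    + move=> z [Uz rz]; split => //; exists z => //; rewrite /Bl ballEmdist /= mdistxx.
      by rewrite divr_gt0 // Upos.
    + move=> z' [Uz' [z [Uz rz] bz]]; split => //.
      move: bz; rewrite /Bl ballEmdist /= => bz.
      have := Upos z Uz => hz.
      have h5 : 5 * d z z' < d z c by lra.
      have [Rzz _] := Rel_ball _ _ _ hz h5.
      exact: (reachS rz Uz' Rzz).
  - exists (~` \bigcup_(z in U `\` A) Bl z).
      by rewrite closedC; apply: bigcup_open => z _; exact: ball_openM.
    apply/seteqP; split.
    + move=> z [Uz rz]; split => // -[w [Uw nAw] bw]; apply: nAw; split => //.
      move: bw; rewrite /Bl ballEmdist /= => bw.
      have := Upos w Uw => hw.
      have h5 : 5 * d w z < d w c by lra.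
      have [_ Rzw] := Rel_ball _ _ _ hw h5.
      exact: (reachS rz Uw Rzw).
    + move=> z [Uz nC]; split => //.
      have [rz|nrz] := pselect (reach c a U z) => //; exfalso; apply: nC.
      exists z; first by split => // -[].
      by rewrite /Bl ballEmdist /= mdistxx divr_gt0 // Upos.
move=> b Ub; have : A b by rewrite AU.
by case.
Qed.


Lemma reach_near (X Y : nat -> set Z) (Zinf : set Z) (c a : Z)
  (cross : forall n x y, X n x -> Y n y ->
     exists w, [/\ X n w, Y n w & d x w <= d x y]) z :
  reach c a (Zinf `\ c) z ->
  exists2 r, 0 < r & forall δ n, 0 < δ -> δ <= r ->
    (forall z, Zinf z -> exists w, (X n `|` Y n) w /\ d z w < δ) ->
    (forall w, X n w -> Y n w -> d w c < 2 * δ) ->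
    (exists x, X n x /\ d a x < δ) ->
    exists x, X n x /\ d z x < δ.
Proof.
elim => [|{}z z' rz [r0 r00 IH] [Zz' nz'] Rzz].
  by exists 1 => // δ n _ _ _ _ [x hx]; exists x.
have hz' : 0 < d z' c by rewrite mdist_gt0; apply/eqP => h; apply: nz'; rewrite h.
exists (Num.min r0 (d z' c / 10)); first by rewrite lt_min r00 /= divr_gt0.
move=> δ n δ0; rewrite le_min => /andP[δr0 δz'] H1 H2 H3.
have [x [Xx dzx]] := IH δ n δ0 δr0 H1 H2 H3.
have [w [XYw dz'w]] := H1 z' Zz'.
case: XYw => [Xw|Yw]; first by exists w.
have [v [Xv Yv dxv]] := cross n x w Xx Yw.
have dvc := H2 v Xv Yv.
exfalso; move: Rzz; rewrite /Rel lt_min => /andP[_ R2].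
have t1 := metric_triangle z' v c.
have t2 := metric_triangle z' x v.
have t3 := metric_triangle z' z x.
have t4 := metric_triangle x z' w.
have t5 := metric_triangle x z z'.
have s1 := metric_sym z' z.
have s2 := metric_sym x z.
lra.
Qed.

Lemma diam_ge0 (A : set Z) : (0 <= diam A)%E.
Proof. by apply: ereal_sup_ubound; right. Qed.

Lemma far_point (A : set Z) c e : 0 < e -> (e%:E < diam A)%E ->
  exists a, A a /\ e / 2 < d a c.
Proof.
move=> e0 /ereal_sup_gt [y [[[p1 p2] [/= A1 A2] <-]|->]]; last first.
  by rewrite lte_fin; lra.
rewrite lte_fin => h.
have t := metric_triangle p1 c p2; have s := metric_sym c p2.
have [h1|h1] := ltP (e / 2) (d p1 c); first by exists p1.
by exists p2; split => //; lra.
Qed.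


Lemma diam_pt (A : set Z) e : 0 < e -> (e%:E < diam A)%E -> exists a, A a.
Proof.
move=> e0 /ereal_sup_gt [y [[[p1 p2] [/= A1 A2] <-]|->]]; last first.
  by rewrite lte_fin; lra.
by exists p1.
Qed.

End S.

Theorem lemma5p5 (R : realType) (Z : metricType R)
    (X Y : nat -> set Z) (Zinf : set Z) :
  compact [set: Z] ->
  (forall n, compact (X n)) -> (forall n, compact (Y n)) ->
  compact Zinf ->
  (fun n => hausdorff_dist (X n `|` Y n) Zinf) @ \oo --> 0%E ->
  (forall n, geodesic_set (X n `|` Y n)) ->
  two_connected Zinf ->
  (fun n => diam (X n `&` Y n)) @ \oo --> 0%E ->
  (fun n => mine (diam (X n)) (diam (Y n))) @ \oo --> 0%E.
Proof.
move=> cZ cX cY cZinf Hh G two Hd.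
have clX n : closed (X n) := compact_closed (@metric_hausdorff _ _) (cX n).
have clY n : closed (Y n) := compact_closed (@metric_hausdorff _ _) (cY n).
have clZ : closed Zinf := compact_closed (@metric_hausdorff _ _) cZinf.
have cross n x y : X n x -> Y n y ->
    exists w, [/\ X n w, Y n w & mdist x w <= mdist x y].
  exact: crossing (G n) (clX n) (clY n).
have evH δ : 0 < δ -> \forall n \near \oo,
    (hausdorff_dist (X n `|` Y n) Zinf < δ%:E)%E.
  move=> δ0; have h : (0%E < δ%:E)%E by rewrite lte_fin.
  exact: Hh _ (open_ereal_lt' h).
have evD δ : 0 < δ -> \forall n \near \oo, (diam (X n `&` Y n) < δ%:E)%E.
  move=> δ0; have h : (0%E < δ%:E)%E by rewrite lte_fin.
  exact: Hd _ (open_ereal_lt' h).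
have hH1 δ : 0 < δ -> exists M, forall n, (M <= n)%N ->
    forall z, Zinf z -> exists w, (X n `|` Y n) w /\ mdist z w < δ.
  move=> δ0; have [M _ HM] := evH δ δ0; exists M => n hn z Zz.
  have := HM n hn; rewrite /hausdorff_dist /= gt_max => /andP[_ h1].
  have : (ereal_inf [set (mdist w z)%:E | w in X n `|` Y n] < δ%:E)%E.
    by apply: le_lt_trans h1; apply: ereal_sup_ubound; exists z.
  move=> /ereal_inf_lt [y [w XYw <-]]; rewrite lte_fin => hy.
  by exists w; split => //; rewrite metric_sym.
have hH0 δ : 0 < δ -> exists M, forall n, (M <= n)%N ->
    forall w, (X n `|` Y n) w -> exists z, Zinf z /\ mdist w z < δ.
  move=> δ0; have [M _ HM] := evH δ δ0; exists M => n hn w XYw.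
  have := HM n hn; rewrite /hausdorff_dist /= gt_max => /andP[h0 _].
  have : (ereal_inf [set (mdist w z)%:E | z in Zinf] < δ%:E)%E.
    by apply: le_lt_trans h0; apply: ereal_sup_ubound; exists w.
  move=> /ereal_inf_lt [y [z Zz <-]]; rewrite lte_fin => hy.
  by exists z.
have hDi δ : 0 < δ -> exists M, forall n, (M <= n)%N ->
    forall w w', X n w -> Y n w -> X n w' -> Y n w' -> mdist w w' < δ.
  move=> δ0; have [M _ HM] := evD δ δ0; exists M => n hn w w' Xw Yw Xw' Yw'.
  have := HM n hn => /= h.
  have : ((mdist w w')%:E <= diam (X n `&` Y n))%E.
    by apply: ereal_sup_ubound; left; exists (w, w').
  by move=> /le_lt_trans /(_ h); rewrite lte_fin.
suff core : forall e, 0 < e -> \forall n \near \oo,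
    (mine (diam (X n)) (diam (Y n)) <= e%:E)%E.
  have m0 n : (0 <= mine (diam (X n)) (diam (Y n)))%E.
    by rewrite le_min !diam_ge0.
  apply/fine_cvgP; split.
    apply: filterS (core 1 ltr01) => n hn.
    move: (m0 n) hn; case: (mine _ _) => //.
  apply/cvgrPdist_le => e e0; apply: filterS (core e e0) => n /=.
  move: (m0 n); case: (mine _ _) => // r; rewrite !lee_fin => r0 re.
  by rewrite sub0r normrN ger0_norm.
move=> e e0.
have [//|nP] := pselect (\forall n \near \oo,
    (mine (diam (X n)) (diam (Y n)) <= e%:E)%E).
exfalso.
have bad M : exists t : nat * (Z * Z * Z), let: (n, ((a, b), c)) := t in
   [/\ (M <= n)%N, X n a, Y n b, X n c & Y n c] /\
       (e/2 < mdist a c /\ e/2 < mdist b c).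
  have [[n [Mn hn]]|hno] := pselect (exists n, (M <= n)%N /\
      ~ (mine (diam (X n)) (diam (Y n)) <= e%:E)%E); last first.
    exfalso; apply: nP; exists M => // n /= Mn.
    apply: contrapT => hn; apply: hno; exists n; split => //.
  move/negP: hn; rewrite -ltNge lt_min => /andP[hX hY].
  have [x Xx] := diam_pt _ _ e0 hX.
  have [y Yy] := diam_pt _ _ e0 hY.
  have [c [Xc Yc _]] := cross n x y Xx Yy.
  have [a [Xa ha]] := far_point _ c _ e0 hX.
  have [b [Yb hb]] := far_point _ c _ e0 hY.
  by exists (n, ((a, b), c)).
have [g hg] := choice bad.
have cT : compact [set: Z * Z * Z].
  by rewrite -!setXTT; apply: compact_setX => //; apply: compact_setX.
have [[[a b] c] [_ clu]] := cT ((fun M => (g M).2) @ \oo) _ filterT.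
have Clus δ M0 : 0 < δ -> exists n a' b' c',
    [/\ (M0 <= n)%N, X n a', Y n b', X n c' & Y n c'] /\
    [/\ e/2 < mdist a' c', e/2 < mdist b' c', mdist a a' < δ,
        mdist b b' < δ & mdist c c' < δ].
  move=> δ0.
  have := clu [set t | exists2 M, (M0 <= M)%N & t = (g M).2]
    (ball ((a, b), c) δ) _ (nbhsx_ballx _ _ δ0).
  case=> [|t [[M hM ->] hb]].
    by exists M0 => // M /= hM; exists M.
  move: (hg M) hb; case: (g M) => n [[a' b'] c'] [[hn Xa Yb Xc Yc] [hac hbc]] hb.
  move: hb => [[ba bb] bc]; move: ba bb bc; rewrite !ballEmdist /= => ba bb bc.
  exists n, a', b', c'; split; split => //; exact: leq_trans hM hn.
have inZ p : (forall δ M, 0 < δ -> exists n w,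
    [/\ (M <= n)%N, (X n `|` Y n) w & mdist p w < δ]) -> Zinf p.
  move=> H; apply: closed_mdist clZ _ => δ δ0.
  have δ2 : 0 < δ / 2 by rewrite divr_gt0.
  have [M HM] := hH0 _ δ2.
  have [n [w [Mn XYw pw]]] := H _ M δ2.
  have [z [Zz wz]] := HM n Mn w XYw.
  exists z; split => //; have := metric_triangle p w z; lra.
have Za : Zinf a.
  apply: inZ => δ M δ0.
  have [n [a' [b' [c' [[Mn Xa Yb Xc Yc] [hac hbc da db dc]]]]]] := Clus δ M δ0.
  by exists n, a'; split => //; left.
have Zb : Zinf b.
  apply: inZ => δ M δ0.
  have [n [a' [b' [c' [[Mn Xa Yb Xc Yc] [hac hbc da db dc]]]]]] := Clus δ M δ0.
  by exists n, b'; split => //; right.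
have Zc : Zinf c.
  apply: inZ => δ M δ0.
  have [n [a' [b' [c' [[Mn Xa Yb Xc Yc] [hac hbc da db dc]]]]]] := Clus δ M δ0.
  by exists n, c'; split => //; left.
have [hac0 hbc0] : 0 < mdist a c /\ 0 < mdist b c.
  have e8 : 0 < e / 8 by rewrite divr_gt0.
  have [n [a' [b' [c' [[Mn Xa Yb Xc Yc] [hac hbc da db dc]]]]]] := Clus _ 0%N e8.
  have t1 := metric_triangle a' a c'; have t2 := metric_triangle a c c'.
  have t3 := metric_triangle b' b c'; have t4 := metric_triangle b c c'.
  have s1 := metric_sym a' a; have s2 := metric_sym b' b.
  split; lra.
have cU := two c Zc.
have Upos z : (Zinf `\ c) z -> 0 < mdist z c.
  by move=> [_ nz]; rewrite mdist_gt0; apply/eqP => h; apply: nz.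
have Ua : (Zinf `\ c) a.
  by split => // /= h; move: hac0; rewrite h mdistxx ltxx.
have Ub : (Zinf `\ c) b.
  by split => // /= h; move: hbc0; rewrite h mdistxx ltxx.
have rb := chain_all _ _ _ cU Ua Upos _ Ub.
have [r r0 Hr] := @reach_near _ _ X Y Zinf c a cross b rb.
pose δ := Num.min r (mdist b c / 10).
have δ0 : 0 < δ by rewrite lt_min r0 /= divr_gt0.
have δr : δ <= r by rewrite ge_min lexx.
have δb : δ <= mdist b c / 10 by rewrite ge_min lexx orbT.
have [M1 HM1] := hH1 δ δ0.
have [M2 HM2] := hDi δ δ0.
have [n [a' [b' [c' [[Mn Xa Yb Xc Yc] [hac hbc da db dc]]]]]] := Clus δ (maxn M1 M2) δ0.
have H1 := HM1 n (leq_trans (leq_maxl _ _) Mn).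
have H2 : forall w, X n w -> Y n w -> mdist w c < 2 * δ.
  move=> w Xw Yw; have := HM2 n (leq_trans (leq_maxr _ _) Mn) w c' Xw Yw Xc Yc.
  have := metric_triangle w c' c; have := metric_sym c c'; lra.
have H3 : exists x, X n x /\ mdist a x < δ by exists a'.
have [x [Xx dbx]] := Hr δ n δ0 δr H1 H2 H3.
have [v [Xv Yv dxv]] := cross n x b' Xx Yb.
have dvc := H2 v Xv Yv.
have t1 := metric_triangle b v c; have t2 := metric_triangle b x v.
have t3 := metric_triangle x b b'; have s1 := metric_sym x b.
lra.
Qed.
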